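(* Let $(E,\|\cdot\|)$ be a normed space over $K$ and let $A$ be a local compactoid in $E$. If the linear span $[A]$, with the norm restricted from $E$, is a Banach space, then $A$ is the sum of a compactoid and a space of finite type, i.e. $A=B+D$ for some compactoid $B\subseteq E$ and some linear subspace $D\subseteq E$ which, with the induced topology, is of finite type.
   Context: $K$ is a field complete with respect to a non-trivial non-archimedean absolute value, $B_K=\{x\in K:|x|\le1\}$; norms and seminorms are non-archimedean. Absolutely convex = $B_K$-submodule; $[X]$ is the linear span and $\mathrm{aco}\,X$ the absolutely convex hull. A compactoid is an absolutely convex $B$ such that for every zero neighbourhood $U$ there is a finite $S$ with $B\subseteq U+\mathrm{aco}\,S$. A local compactoid in $E$ is an absolutely convex $A$ such that for every zero neighbourhood $U$ there is a finite $S\subseteq E$ with $A\subseteq U+[S]$. A locally convex space $D$ is of finite type if for every continuous seminorm $p$ on $D$, the normed space $D/\{p=0\}$ is finite-dimensional. *)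

(* Defs.v *)
From HB Require Import structures.
From mathcomp Require Import all_boot all_order all_algebra.
From mathcomp Require Import boolp classical_sets reals.
Set Implicit Arguments. Unset Strict Implicit. Unset Printing Implicit Defensive.
Import Order.TTheory GRing.Theory Num.Theory.
Local Open Scope ring_scope.
Local Open Scope classical_set_scope.

Section Defs.
Variables (R : realType) (K : fieldType).

Definition nonarch_abs (abs : K -> R) : Prop :=
  [/\ forall x, 0 <= abs x,
      forall x, abs x = 0 <-> x = 0,
      forall x y, abs (x * y) = abs x * abs y &
      forall x y, abs (x + y) <= Num.max (abs x) (abs y)].

Definition nontrivial_abs (abs : K -> R) : Prop :=
  exists x, abs x != 0 /\ abs x != 1.

Definition complete_abs (abs : K -> R) : Prop :=
  forall u : nat -> K,
    (forall eps : R, 0 < eps -> exists N, forall m n, (N <= m)%N -> (N <= n)%N ->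
        abs (u m - u n) < eps) ->
    exists l, forall eps : R, 0 < eps -> exists N, forall n, (N <= n)%N ->
        abs (u n - l) < eps.

Variables (abs : K -> R) (E : lmodType K).

Definition nonarch_norm (nrm : E -> R) : Prop :=
  [/\ forall x, 0 <= nrm x,
      forall x, nrm x = 0 <-> x = 0,
      forall (a : K) x, nrm (a *: x) = abs a * nrm x &
      forall x y, nrm (x + y) <= Num.max (nrm x) (nrm y)].

Definition abs_convex (A : set E) : Prop :=
  [/\ A 0,
      forall x y, A x -> A y -> A (x + y) &
      forall (a : K) x, abs a <= 1 -> A x -> A (a *: x)].

Definition linear_subspace (D : set E) : Prop :=
  [/\ D 0,
      forall x y, D x -> D y -> D (x + y) &
      forall (a : K) x, D x -> D (a *: x)].

Definition lspan (X : set E) : set E :=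
  [set x | exists n (s : 'I_n -> E) (c : 'I_n -> K),
     (forall i, X (s i)) /\ x = \sum_(i < n) c i *: s i].

Definition aco (X : set E) : set E :=
  [set x | exists n (s : 'I_n -> E) (c : 'I_n -> K),
     [/\ forall i, X (s i), forall i, abs (c i) <= 1 &
         x = \sum_(i < n) c i *: s i]].

Definition msum (X Y : set E) : set E :=
  [set z | exists x y, [/\ X x, Y y & z = x + y]].

Variable nrm : E -> R.

Definition zero_nbhd (U : set E) : Prop :=
  exists eps : R, 0 < eps /\ [set x | nrm x < eps] `<=` U.

Definition compactoid (B : set E) : Prop :=
  abs_convex B /\
  forall U, zero_nbhd U ->
    exists n (s : 'I_n -> E), B `<=` msum U (aco (range s)).

Definition local_compactoid (A : set E) : Prop :=
  abs_convex A /\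
  forall U, zero_nbhd U ->
    exists n (s : 'I_n -> E), A `<=` msum U (lspan (range s)).

Definition banach_subset (F : set E) : Prop :=
  forall u : nat -> E, (forall n, F (u n)) ->
    (forall eps : R, 0 < eps -> exists N, forall m n, (N <= m)%N -> (N <= n)%N ->
        nrm (u m - u n) < eps) ->
    exists l, F l /\ forall eps : R, 0 < eps -> exists N, forall n, (N <= n)%N ->
        nrm (u n - l) < eps.

Definition cont_seminorm_on (D : set E) (p : E -> R) : Prop :=
  [/\ forall x, D x -> 0 <= p x,
      forall (a : K) x, D x -> p (a *: x) = abs a * p x,
      forall x y, D x -> D y -> p (x + y) <= Num.max (p x) (p y) &
      forall x, D x -> forall eps : R, 0 < eps -> exists delta : R, 0 < delta /\
        forall y, D y -> nrm (y - x) < delta -> `|p y - p x| < eps].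

(* D/{p = 0} is finite-dimensional: spanned by the images of finitely many
   vectors of D *)
Definition fin_dim_quotient (D : set E) (p : E -> R) : Prop :=
  exists n (s : 'I_n -> E), (forall i, D (s i)) /\
    forall x, D x -> exists y, lspan (range s) y /\ p (x - y) = 0.

Definition finite_type (D : set E) : Prop :=
  forall p : E -> R, cont_seminorm_on D p -> fin_dim_quotient D p.

End Defs.

(* Main.v *)
Require Import Defs.
From HB Require Import structures.
From mathcomp Require Import all_boot all_order all_algebra.
From mathcomp Require Import boolp classical_sets reals.
From mathcomp Require Import lra zify ring.
Set Implicit Arguments. Unset Strict Implicit. Unset Printing Implicit Defensive.
Import Order.TTheory GRing.Theory Num.Theory.
Local Open Scope ring_scope.
Local Open Scope classical_set_scope.

Lemma subr_pair (V : zmodType) (a b c d : V) : (a - b) - (c - d) = (a - c) - (b - d).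
Proof. by rewrite !opprB addrACA [RHS]addrACA [- c - b]addrC. Qed.

Lemma sub3 (V : zmodType) (a b c d : V) : (a - b - c) + (b - d) = a - (c + d).
Proof. by rewrite opprD addrAC addrA subrK -addrA [- d - c]addrC. Qed.

Lemma subr_rec (V : zmodType) (a b c s : V) : (a - (b + c)) + (s + c) = a + s - b.
Proof. by rewrite opprD addrACA subrK. Qed.

Section D.
Variables (K : fieldType) (E : lmodType K).
Lemma dependence n (s v : nat -> E) :
  (forall i, (i < n.+1)%N -> exists c : nat -> K, v i = \sum_(l < n) c l *: s l) ->
  exists c : nat -> K, (exists j, (j < n.+1)%N /\ c j != 0) /\ \sum_(i < n.+1) c i *: v i = 0.
Proof.
move=> hv.
have hv' : forall i, exists c : nat -> K, (i < n.+1)%N -> v i = \sum_(l < n) c l *: s l.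
  move=> i; case: (ltnP i n.+1) => hi.
    by have [c hc] := hv i hi; exists c.
  by exists (fun _ => 0).
have [Cf hC] := choice hv'.
pose Mx : 'M[K]_(n.+1, n) := \matrix_(i, l) Cf i l.
have hk : kermx Mx != 0.
  rewrite kermx_eq0 /row_free; apply/negP => /eqP h.
  by have := rank_leq_col Mx; rewrite h ltnn.
have [i0 hi0] : exists i0, row i0 (kermx Mx) != 0.
  apply: contrapT => hn; move: hk; rewrite -[kermx Mx == 0]/(kermx Mx == 0).
  have -> : kermx Mx = 0.
    apply/row_matrixP => i; rewrite row0; apply: contrapT => hne; apply: hn; exists i; exact/eqP.
  by rewrite eqxx.
pose x := row i0 (kermx Mx).
have hx : x *m Mx = 0 by rewrite /x -row_mul mulmx_ker row0.
have [j0 hj0] : exists j0, x 0 j0 != 0.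
  apply: contrapT => hn; move: hi0; rewrite -/x.
  have -> : x = 0 by apply/rowP => j; rewrite [in RHS]mxE; apply: contrapT => hne; apply: hn; exists j; apply/eqP.
  by rewrite eqxx.
clearbody x.
exists (fun i => x 0 (inord i)); split.
  by exists j0; split => //; rewrite inord_val.
have -> : \sum_(i < n.+1) x 0 (inord i) *: v i = \sum_(i < n.+1) \sum_(l < n) (x 0 i * Cf i l) *: s l.
  apply: eq_bigr => i _; rewrite inord_val (hC i (ltn_ord i)) scaler_sumr.
  by apply: eq_bigr => l _; rewrite scalerA.
rewrite exchange_big /=; apply: big1 => l _.
rewrite -scaler_suml.
have : (x *m Mx) 0 l = 0 by rewrite hx mxE.
rewrite mxE => h.
have -> : \sum_(i < n.+1) x 0 i * Cf i l = \sum_j x 0 j * Mx j l.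
  by apply: eq_bigr => i _; rewrite /Mx mxE.
by rewrite h scale0r.
Qed.
End D.

Section G.
Variable R : realType.
Lemma bernoulli (h : R) N : 0 <= h -> 1 + N%:R * h <= (1 + h) ^+ N.
Proof.
move=> h0; elim: N => [|N ih]; first by rewrite expr0 mul0r addr0.
rewrite exprS -natr1.
have hN : (0:R) <= N%:R by [].
have hp : 0 <= (1 + h) ^+ N by apply: exprn_ge0; lra.
nra.
Qed.
Lemma geo (q : R) : 0 <= q -> q < 1 -> forall C eps, 0 < eps -> exists N, C * q ^+ N < eps.
Proof.
move=> q0 q1 C eps he.
have [hC|hC] := lerP C 0.
  by exists 0%N; rewrite expr0 mulr1; lra.
have [->|qp] := eqVneq q 0.
  by exists 1%N; rewrite expr1 mulr0.
have qpos : 0 < q by rewrite lt_neqAle eq_sym qp q0.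
set p := q^-1.
have p1 : 1 < p by rewrite /p invf_gt1.
set h := p - 1.
have hpos : 0 < h by rewrite /h; lra.
have c0 : 0 <= C / (eps * h) by apply: divr_ge0; [lra| apply: mulr_ge0; lra].
have := archi_boundP c0.
set N := Num.Def.archi_bound _ => hN.
exists N.
have hX : 0 < q ^+ N by apply: exprn_gt0.
have hXY : q ^+ N * p ^+ N = 1 by rewrite -exprMn /p mulfV ?expr1n // gt_eqF.
have hY := bernoulli N (ltW hpos).
have hNe : C < N%:R * eps * h.
  have hh : 0 < eps * h by apply: mulr_gt0.
  by rewrite -mulrA -ltr_pdivrMr.
have hN0 : (0:R) <= N%:R by [].
have e : 1 + h = p by rewrite /h; lra.
rewrite e in hY.
move: hX hXY hY hNe; set X := q ^+ N; set Y := p ^+ N => hX hXY hY hNe.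
have hY2 : C < eps * Y by nra.
have h3 : 0 < (eps * Y - C) * X by apply: mulr_gt0 => //; lra.
have h4 : eps * Y * X = eps by rewrite -mulrA [Y * X]mulrC hXY mulr1.
nra.
Qed.
Lemma powle (q : R) m N : 0 <= q -> q <= 1 -> (N <= m)%N -> q ^+ m <= q ^+ N.
Proof.
move=> q0 q1 /subnK <-; rewrite exprD; apply: ler_piMl; [exact: exprn_ge0| exact: exprn_ile1].
Qed.
End G.

Section Main.
Variables (R : realType) (K : fieldType) (abs : K -> R) (E : lmodType K) (nrm : E -> R).
Hypothesis habs : nonarch_abs abs.
Hypothesis hnorm : nonarch_norm abs nrm.

Lemma abs_ge0 x : 0 <= abs x. Proof. by case: habs. Qed.
Lemma abs_eq0 x : abs x = 0 <-> x = 0. Proof. by case: habs. Qed.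
Lemma absM x y : abs (x*y) = abs x * abs y. Proof. by case: habs. Qed.
Lemma abs_ultra x y : abs (x+y) <= Num.max (abs x) (abs y). Proof. by case: habs. Qed.
Lemma abs0 : abs 0 = 0. Proof. by apply/abs_eq0. Qed.
Lemma abs_neq0 x : x != 0 -> 0 < abs x.
Proof. move=> hx; rewrite lt_neqAle abs_ge0 andbT eq_sym; apply/eqP => /abs_eq0 h; by rewrite h eqxx in hx. Qed.
Lemma abs1 : abs 1 = 1.
Proof.
have h := absM 1 1; rewrite mulr1 in h.
have h0 := abs_neq0 (oner_neq0 K).
have : abs 1 * (abs 1 - 1) = 0 by rewrite mulrBr mulr1 -h subrr.
move/eqP; rewrite mulf_eq0 subr_eq0 => /orP[/eqP h1|/eqP //]; lra.
Qed.
Lemma absN1 : abs (-1) = 1.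
Proof.
have h := absM (-1) (-1); rewrite mulrNN mulr1 abs1 in h.
have h0 := abs_ge0 (-1).
have : (abs (-1) - 1) * (abs (-1) + 1) = 0.
  rewrite mulrDr mulr1 mulrBl -h mul1r; lra.
move/eqP; rewrite mulf_eq0 subr_eq0 => /orP[/eqP //|/eqP h1]; lra.
Qed.
Lemma absN x : abs (- x) = abs x.
Proof. by rewrite -mulN1r absM absN1 mul1r. Qed.
Lemma absB x y : abs (x - y) = abs (y - x).
Proof. by rewrite -absN opprB. Qed.
Lemma absV x : abs (x^-1) = (abs x)^-1.
Proof.
have [->|hx] := eqVneq x 0; first by rewrite invr0 abs0 invr0.
have h := absM x x^-1; rewrite mulfV // abs1 in h.
have := abs_neq0 hx => hp.
by apply: (mulfI (lt0r_neq0 hp)); rewrite -h mulfV // lt0r_neq0.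
Qed.
Lemma absD_le x y M : abs x <= M -> abs y <= M -> abs (x + y) <= M.
Proof. move=> h1 h2; apply: le_trans (abs_ultra x y) _; by rewrite ge_max h1 h2. Qed.
Lemma absD_lt x y M : abs x < M -> abs y < M -> abs (x + y) < M.
Proof. move=> h1 h2; apply: le_lt_trans (abs_ultra x y) _; by rewrite gt_max h1 h2. Qed.
Lemma abs_eq_of_lt x y : abs (x - y) < abs y -> abs x = abs y.
Proof.
move=> h; apply/eqP; rewrite eq_le; apply/andP; split.
  have -> : x = (x - y) + y by rewrite subrK.
  apply: absD_le; [exact: ltW | by []].
rewrite leNgt; apply/negP => hxy.
have e : abs (x + - (x - y)) < abs y.
  apply: absD_lt; first exact: hxy.
  rewrite absN; exact: h.
by rewrite opprB addrC subrK ltxx in e.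
Qed.
Lemma absX x n : abs (x ^+ n) = abs x ^+ n.
Proof. elim: n => [|n ih]; first by rewrite !expr0 abs1. by rewrite !exprS absM ih. Qed.

Lemma nrm_ge0 x : 0 <= nrm x. Proof. by case: hnorm. Qed.
Lemma nrm_eq0 x : nrm x = 0 <-> x = 0. Proof. by case: hnorm. Qed.
Lemma nrmZ a x : nrm (a *: x) = abs a * nrm x. Proof. by case: hnorm. Qed.
Lemma nrm_ultra x y : nrm (x+y) <= Num.max (nrm x) (nrm y). Proof. by case: hnorm. Qed.
Lemma nrm0 : nrm 0 = 0. Proof. by apply/nrm_eq0. Qed.
Lemma nrmN x : nrm (- x) = nrm x.
Proof. by rewrite -scaleN1r nrmZ absN1 mul1r. Qed.
Lemma nrmB x y : nrm (x - y) = nrm (y - x).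
Proof. by rewrite -nrmN opprB. Qed.
Lemma nrmD_le x y M : nrm x <= M -> nrm y <= M -> nrm (x + y) <= M.
Proof. move=> h1 h2; apply: le_trans (nrm_ultra x y) _; by rewrite ge_max h1 h2. Qed.
Lemma nrmD_lt x y M : nrm x < M -> nrm y < M -> nrm (x + y) < M.
Proof. move=> h1 h2; apply: le_lt_trans (nrm_ultra x y) _; by rewrite gt_max h1 h2. Qed.
Lemma nrm_ge_of_lt x y : nrm x < nrm y -> nrm y <= nrm (x + y).
Proof.
move=> h; rewrite leNgt; apply/negP => h2.
have e : nrm ((x + y) + - x) < nrm y.
  apply: nrmD_lt; first exact: h2.
  rewrite nrmN; exact: h.
by rewrite addrC addKr ltxx in e.
Qed.
Lemma nrm_pos x : x != 0 -> 0 < nrm x.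
Proof. move=> hx; rewrite lt_neqAle nrm_ge0 andbT eq_sym; apply/eqP => /nrm_eq0 h; by rewrite h eqxx in hx. Qed.
Lemma nrm_sum_le (I : Type) (r : seq I) (P : pred I) (F : I -> E) M :
  0 <= M -> (forall i, P i -> nrm (F i) <= M) -> nrm (\sum_(i <- r | P i) F i) <= M.
Proof.
move=> hM hF; apply: (big_ind (fun x => nrm x <= M)) => //; first by rewrite nrm0.
by move=> x y; apply: nrmD_le.
Qed.
Lemma nrm_sum_lt (I : Type) (r : seq I) (P : pred I) (F : I -> E) M :
  0 < M -> (forall i, P i -> nrm (F i) < M) -> nrm (\sum_(i <- r | P i) F i) < M.
Proof.
move=> hM hF; apply: (big_ind (fun x => nrm x < M)) => //; first by rewrite nrm0.
by move=> x y; apply: nrmD_lt.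
Qed.


Local Notation aconv := (@abs_convex R K abs E).

Lemma ac0 (M : set E) : aconv M -> M 0. Proof. by case. Qed.
Lemma acD (M : set E) x y : aconv M -> M x -> M y -> M (x + y). Proof. by case=> _ h _; apply: h. Qed.
Lemma acZ (M : set E) a x : aconv M -> abs a <= 1 -> M x -> M (a *: x). Proof. by case=> _ _ h; apply: h. Qed.
Lemma acN (M : set E) x : aconv M -> M x -> M (- x).
Proof. by move=> h hx; rewrite -scaleN1r; apply: acZ => //; rewrite absN1. Qed.
Lemma acB (M : set E) x y : aconv M -> M x -> M y -> M (x - y).
Proof. by move=> h hx hy; apply: acD => //; apply: acN. Qed.
Lemma ac_sum (M : set E) (I : Type) (r : seq I) (P : pred I) (F : I -> E) :
  aconv M -> (forall i, P i -> M (F i)) -> M (\sum_(i <- r | P i) F i).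
Proof. move=> h hF; apply: (big_ind M) => //; [exact: ac0| by move=> x y; apply: acD]. Qed.

Lemma ls0 (W : set E) : linear_subspace W -> W 0. Proof. by case. Qed.
Lemma lsD (W : set E) x y : linear_subspace W -> W x -> W y -> W (x + y). Proof. by case=> _ h _; apply: h. Qed.
Lemma lsZ (W : set E) a x : linear_subspace W -> W x -> W (a *: x). Proof. by case=> _ _ h; apply: h. Qed.
Lemma lsN (W : set E) x : linear_subspace W -> W x -> W (- x).
Proof. by move=> h hx; rewrite -scaleN1r; apply: lsZ. Qed.
Lemma lsB (W : set E) x y : linear_subspace W -> W x -> W y -> W (x - y).
Proof. by move=> h hx hy; apply: lsD => //; apply: lsN. Qed.
Lemma ls_sum (W : set E) (I : Type) (r : seq I) (P : pred I) (F : I -> E) :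
  linear_subspace W -> (forall i, P i -> W (F i)) -> W (\sum_(i <- r | P i) F i).
Proof. move=> h hF; apply: (big_ind W) => //; [exact: ls0| by move=> x y; apply: lsD]. Qed.
Lemma ls_ac (W : set E) : linear_subspace W -> aconv W.
Proof. by move=> h; split; [exact: ls0 | move=> x y; apply: lsD | move=> a x _; apply: lsZ]. Qed.

Definition spn (n : nat) (s : nat -> E) : set E :=
  [set x | exists c : nat -> K, x = \sum_(i < n) c i *: s i].
Definition acoN n (s : nat -> E) : set E :=
  [set x | exists c : nat -> K, (forall i, abs (c i) <= 1) /\ x = \sum_(i < n) c i *: s i].

Lemma spn_ls n s : linear_subspace (spn n s).
Proof.
split.
- by exists (fun _ => 0); rewrite big1 // => i _; rewrite scale0r.
- move=> x y [c ->] [d ->]; exists (fun i => c i + d i).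
  by rewrite -big_split /=; apply: eq_bigr => i _; rewrite scalerDl.
- move=> a x [c ->]; exists (fun i => a * c i).
  by rewrite scaler_sumr; apply: eq_bigr => i _; rewrite scalerA.
Qed.

Lemma spn_gen n s i : (i < n)%N -> spn n s (s i).
Proof.
move=> hi; exists (fun j => if j == i then 1 else 0).
rewrite (bigD1 (Ordinal hi)) //= eqxx scale1r big1 ?addr0 // => j hj.
have -> : (nat_of_ord j == i) = false.
  by apply/negbTE; move: hj; apply: contra => /eqP e; apply/eqP/val_inj.
by rewrite scale0r.
Qed.

Lemma spn_ext n s t : (forall i, (i < n)%N -> s i = t i) -> spn n s = spn n t.
Proof.
move=> h; rewrite predeqE => x; split=> -[c ->]; exists c; apply: eq_bigr => i _;
  by rewrite h.
Qed.

Lemma spn_rec n s x : spn n.+1 s x <-> exists w c, spn n s w /\ x = w + c *: s n.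
Proof.
split.
  move=> [c ->]; exists (\sum_(i < n) c i *: s i), (c n); split; first by exists c.
  by rewrite big_ord_recr.
move=> [w [a [[c ->] ->]]]; exists (fun i => if i == n then a else c i).
rewrite big_ord_recr /= eqxx; congr (_ + _); apply: eq_bigr => i _.
by rewrite ltn_eqF.
Qed.

Lemma spn_mono n s : spn n s `<=` spn n.+1 s.
Proof. by move=> x hx; apply/spn_rec; exists x, 0; rewrite scale0r addr0. Qed.

Lemma sub_spn (W : set E) n s : linear_subspace W -> (forall i, (i < n)%N -> W (s i)) -> spn n s `<=` W.
Proof. by move=> hW hs x [c ->]; apply: ls_sum => // i _; apply: lsZ => //; apply: hs. Qed.

Lemma lspan_sub (W : set E) X : linear_subspace W -> X `<=` W -> lspan X `<=` W.
Proof. by move=> hW hX x [n [s [c [hs ->]]]]; apply: ls_sum => // i _; apply: lsZ => //; apply: hX. Qed.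

Definition ext (n : nat) (f : 'I_n -> E) : nat -> E := fun k => oapp f 0 (insub k).
Lemma ext_val n (f : 'I_n -> E) (i : 'I_n) : ext f i = f i.
Proof. by rewrite /ext valK. Qed.

Lemma lspan_spn n (f : 'I_n -> E) : lspan (range f) `<=` spn n (ext f).
Proof.
apply: lspan_sub; first exact: spn_ls.
by move=> x [i _ <-]; rewrite -ext_val; apply: spn_gen.
Qed.

Lemma spn_lspan n t : spn n t `<=` lspan (range (fun i : 'I_n => t i)).
Proof.
move=> x [c ->]; exists n, (fun i : 'I_n => t i), (fun i : 'I_n => c i).
by split.
Qed.

Lemma half_ge0 : (0:R) <= 2^-1. Proof. by rewrite invr_ge0. Qed.
Lemma half_lt1 : (2^-1 : R) < 1. Proof. by rewrite invf_lt1 // ltr1n. Qed.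
Lemma half_pow_small eps : 0 < eps -> exists N, (2^-1 : R) ^+ N < eps.
Proof. move=> he; have [N hN] := geo half_ge0 half_lt1 1 he; exists N; by rewrite mul1r in hN. Qed.
Lemma half_pow_gt0 k : (0 : R) < 2^-1 ^+ k. Proof. by apply: exprn_gt0; rewrite invr_gt0. Qed.

Definition cvgE (u : nat -> E) l := forall eps, 0 < eps -> exists N, forall n, (N <= n)%N -> nrm (u n - l) < eps.
Definition cauchyE (u : nat -> E) := forall eps, 0 < eps -> exists N, forall m n, (N <= m)%N -> (N <= n)%N -> nrm (u m - u n) < eps.
Definition completeS (V : set E) := forall u, (forall k, V (u k)) -> cauchyE u -> exists l, V l /\ cvgE u l.
Definition closedS (M : set E) := forall u x, (forall k, M (u k)) -> cvgE u x -> M x.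

Lemma cvg_cauchy u l : cvgE u l -> cauchyE u.
Proof.
move=> h eps he; have [N hN] := h eps he; exists N => m n hm hn.
have -> : u m - u n = (u m - l) + - (u n - l) by rewrite opprB addrA subrK.
apply: nrmD_lt; [exact: hN| rewrite nrmN; exact: hN].
Qed.

Lemma small0 x : (forall eps, 0 < eps -> nrm x < eps) -> x = 0.
Proof.
move=> h; apply/nrm_eq0; apply/eqP; rewrite eq_le nrm_ge0 andbT leNgt; apply/negP => hp.
by have := h _ hp; rewrite ltxx.
Qed.

Lemma cvg_unique u l1 l2 : cvgE u l1 -> cvgE u l2 -> l1 = l2.
Proof.
move=> h1 h2; apply/eqP; rewrite -subr_eq0; apply/eqP/small0 => eps he.
have [N1 hN1] := h1 eps he; have [N2 hN2] := h2 eps he.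
have -> : l1 - l2 = (u (maxn N1 N2) - l2) + - (u (maxn N1 N2) - l1).
  by rewrite opprB [RHS]addrC addrA subrK.
apply: nrmD_lt; first by apply: hN2; rewrite leq_maxr.
by rewrite nrmN; apply: hN1; rewrite leq_maxl.
Qed.

Lemma closed_of_complete (W : set E) : completeS W ->
  forall x, (forall eps, 0 < eps -> exists w, W w /\ nrm (x - w) < eps) -> W x.
Proof.
move=> hW x hx.
have [w hw] := choice (fun k => hx _ (half_pow_gt0 k)).
have hc : cvgE w x.
  move=> eps he; have [N hN] := half_pow_small he; exists N => n hn.
  rewrite nrmB; apply: lt_le_trans (proj2 (hw n)) _.
  apply: le_trans _ (ltW hN); apply: powle => //; [exact: half_ge0|exact: ltW half_lt1].
have [l [hl hcl]] := hW w (fun k => proj1 (hw k)) (cvg_cauchy hc).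
by rewrite (cvg_unique hc hcl).
Qed.

Definition cpt (B : set E) := forall eps, 0 < eps -> exists n s, forall b, B b ->
  exists u v, [/\ nrm u < eps, acoN n s v & b = u + v].

Lemma sum_le_term n (f : nat -> R) i : (forall j, 0 <= f j) -> (i < n)%N -> f i <= \sum_(j < n) f j.
Proof.
move=> h0 hi; rewrite (bigD1 (Ordinal hi)) //= lerDl; apply: sumr_ge0 => j _; exact: h0.
Qed.

Lemma acoN_bound n s v : acoN n s v -> nrm v <= \sum_(i < n) nrm (s i).
Proof.
move=> [c [hc ->]]; apply: nrm_sum_le; first by apply: sumr_ge0 => i _; exact: nrm_ge0.
move=> i _; rewrite nrmZ; apply: (le_trans _ (sum_le_term (f := fun j => nrm (s j)) (fun j => nrm_ge0 _) (ltn_ord i))).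
by rewrite -[X in _ <= X]mul1r; apply: ler_wpM2r => //; exact: nrm_ge0.
Qed.

Lemma cpt_bounded B : cpt B -> exists rho, 0 < rho /\ forall b, B b -> nrm b < rho.
Proof.
move=> h; have [n [s hs]] := h 1 ltr01.
have h0 : 0 <= \sum_(i < n) nrm (s i) by apply: sumr_ge0 => i _; exact: nrm_ge0.
exists (1 + \sum_(i < n) nrm (s i)); split; first by lra.
move=> b /hs [u [v [hu hv ->]]]; apply: nrmD_lt; first by lra.
have := acoN_bound hv; lra.
Qed.

Lemma cpt_seg v : cpt [set y | exists a, abs a <= 1 /\ y = a *: v].
Proof.
move=> eps he; exists 1%N, (fun _ => v) => b [a [ha ->]]; exists 0, (a *: v); split.
- by rewrite nrm0.
- by exists (fun _ => a); split => //; rewrite big_ord1.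
- by rewrite add0r.
Qed.

Lemma cpt_scale B lam : cpt B -> cpt [set y | exists b, B b /\ y = lam *: b].
Proof.
move=> h eps he; have [->|hl] := eqVneq lam 0.
  exists 0%N, (fun _ => 0) => y [b [_ ->]]; exists 0, 0; split.
  - by rewrite nrm0.
  - by exists (fun _ => 0); split; [move=> _; rewrite abs0 ler01| rewrite big_ord0].
  - by rewrite scale0r addr0.
have hl0 := abs_neq0 hl.
have [n [s hs]] := h (eps / abs lam) (divr_gt0 he hl0).
exists n, (fun i => lam *: s i) => y [b [/hs [u [v [hu [c [hc hv]] ->]]] ->]].
exists (lam *: u), (lam *: v); split.
- by rewrite nrmZ mulrC -ltr_pdivlMr.
- exists c; split => //; rewrite hv scaler_sumr; apply: eq_bigr => i _.
  by rewrite !scalerA mulrC.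
- by rewrite scalerDr.
Qed.

Lemma sum_cat (F : nat -> E) n1 n2 :
  \sum_(i < n1 + n2) F i = \sum_(i < n1) F i + \sum_(i < n2) F (n1 + i)%N.
Proof. by rewrite big_split_ord. Qed.

Lemma cpt_sum B1 B2 : cpt B1 -> cpt B2 -> cpt (msum B1 B2).
Proof.
move=> h1 h2 eps he.
have [n1 [s1 hs1]] := h1 eps he; have [n2 [s2 hs2]] := h2 eps he.
exists (n1 + n2)%N, (fun i => if (i < n1)%N then s1 i else s2 (i - n1)%N).
move=> b [x [y [/hs1 [u1 [v1 [hu1 [c1 [hc1 hv1]] ->]]] /hs2 [u2 [v2 [hu2 [c2 [hc2 hv2]] ->]]] ->]]].
exists (u1 + u2), (v1 + v2); split.
- exact: nrmD_lt.
- exists (fun i => if (i < n1)%N then c1 i else c2 (i - n1)%N); split.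
    by move=> i; case: ifP.
  rewrite (sum_cat (fun i => (if (i < n1)%N then c1 i else c2 (i - n1)%N) *:
     (if (i < n1)%N then s1 i else s2 (i - n1)%N))) hv1 hv2; congr (_ + _).
    by apply: eq_bigr => i _; rewrite ltn_ord.
  by apply: eq_bigr => i _; rewrite ltnNge leq_addr /= addKn.
- by rewrite addrACA.
Qed.

Lemma cpt_sub (B B' : set E) : B `<=` B' -> cpt B' -> cpt B.
Proof. by move=> hs h eps he; have [n [s hn]] := h eps he; exists n, s => b /hs /hn. Qed.

Lemma aconv_seg v : aconv [set y | exists a, abs a <= 1 /\ y = a *: v].
Proof.
split.
- by exists 0; rewrite abs0 scale0r ler01.
- by move=> x y [a [ha ->]] [b [hb ->]]; exists (a + b); rewrite scalerDl; split => //; apply: absD_le.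
- move=> a x ha [b [hb ->]]; exists (a * b); rewrite scalerA absM; split => //.
  by rewrite -[1]mulr1; apply: ler_pM => //; exact: abs_ge0.
Qed.

Lemma aconv_scale B lam : aconv B -> aconv [set y | exists b, B b /\ y = lam *: b].
Proof.
move=> h; split.
- by exists 0; rewrite scaler0; split => //; exact: ac0.
- by move=> x y [a [ha ->]] [b [hb ->]]; exists (a + b); rewrite scalerDr; split => //; apply: acD.
- move=> a x ha [b [hb ->]]; exists (a *: b); split; first exact: acZ.
  by rewrite !scalerA mulrC.
Qed.

Lemma aconv_msum B1 B2 : aconv B1 -> aconv B2 -> aconv (msum B1 B2).
Proof.
move=> h1 h2; split.
- by exists 0, 0; rewrite addr0; split => //; exact: ac0.
- move=> x y [x1 [x2 [hx1 hx2 ->]]] [y1 [y2 [hy1 hy2 ->]]].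
  by exists (x1 + y1), (x2 + y2); split; [apply: acD|apply: acD| rewrite addrACA].
- move=> a x ha [x1 [x2 [hx1 hx2 ->]]]; exists (a *: x1), (a *: x2).
  by split; [apply: acZ|apply: acZ|rewrite scalerDr].
Qed.

Lemma aconv_inter (B1 B2 : set E) : aconv B1 -> aconv B2 -> aconv (B1 `&` B2).
Proof.
move=> h1 h2; split.
- by split; exact: ac0.
- by move=> x y [? ?] [? ?]; split; apply: acD.
- by move=> a x ha [? ?]; split; apply: acZ.
Qed.

Hypothesis hcompK : complete_abs abs.
Variable pi : K.
Hypothesis hpi0 : 0 < abs pi.
Hypothesis hpi1 : abs pi < 1.

Definition decompP (V : set E) := forall M, aconv M -> M `<=` V ->
  exists B, [/\ aconv B, cpt B & exists k t, spn k t `<=` M /\ M `<=` msum B (spn k t)].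

Lemma real_small0 (a : R) : 0 <= a -> (forall eps, 0 < eps -> a < eps) -> a = 0.
Proof.
move=> h0 h; apply/eqP; rewrite eq_le h0 andbT leNgt; apply/negP => hp.
by have := h _ hp; rewrite ltxx.
Qed.

Lemma pipow_gt0 k : 0 < abs pi ^+ k. Proof. exact: exprn_gt0. Qed.
Lemma pipow_le1 k : abs pi ^+ k <= 1. Proof. by apply: exprn_ile1; [exact: abs_ge0| exact: ltW]. Qed.
Lemma pipow_mono k m : (k <= m)%N -> abs pi ^+ m <= abs pi ^+ k.
Proof. by move=> h; apply: powle => //; [exact: abs_ge0| exact: ltW]. Qed.

Lemma small_mul (a r eps : R) : 0 <= r -> 0 < eps -> a < eps / (r + 1) -> a * r < eps.
Proof.
move=> hr he; rewrite ltr_pdivlMr; last by lra.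
move=> h; have [ha|ha] := lerP a 0; first by nra.
nra.
Qed.

Section Step.
Variables (W : set E) (e : E) (d : R).
Hypothesis hW : linear_subspace W.
Hypothesis hWc : completeS W.
Hypothesis hd : 0 < d.
Hypothesis hdist : forall w, W w -> d <= nrm (e - w).

Definition Vs := [set x | exists w c, W w /\ x = w + c *: e].

Lemma keyL w c : W w -> abs c * d <= nrm (w + c *: e).
Proof.
move=> hw; have [->|hc] := eqVneq c 0; first by rewrite abs0 mul0r; exact: nrm_ge0.
have -> : w + c *: e = c *: (e - ((- c^-1) *: w)).
  by rewrite scalerBr scalerA mulrN mulfV // scaleN1r opprK addrC.
rewrite nrmZ; apply: ler_wpM2l; first exact: abs_ge0.
by apply: hdist; apply: lsZ.
Qed.

Lemma coef_unique w1 w2 c1 c2 : W w1 -> W w2 -> w1 + c1 *: e = w2 + c2 *: e -> c1 = c2 /\ w1 = w2.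
Proof.
move=> h1 h2 heq.
have h0 : (w1 - w2) + (c1 - c2) *: e = 0.
  by rewrite scalerBl addrACA heq addrACA !subrr addr0.
have hc : c1 = c2.
  have := @keyL (w1 - w2) (c1 - c2) (lsB hW h1 h2); rewrite h0 nrm0 => hle.
  have : abs (c1 - c2) = 0.
    apply/eqP; rewrite eq_le abs_ge0 andbT.
    by rewrite -(pmulr_lle0 _ hd).
  by move/abs_eq0/eqP; rewrite subr_eq0 => /eqP.
split => //; move: heq; rewrite hc; exact: addIr.
Qed.

Lemma Vs_ls : linear_subspace Vs.
Proof.
split.
- by exists 0, 0; rewrite scale0r addr0; split => //; exact: ls0.
- move=> x y [w1 [c1 [h1 ->]]] [w2 [c2 [h2 ->]]]; exists (w1 + w2), (c1 + c2).
  by split; [exact: lsD | rewrite scalerDl addrACA].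
- move=> a x [w [c [hw ->]]]; exists (a *: w), (a * c).
  by split; [exact: lsZ | rewrite scalerDr scalerA].
Qed.

Lemma W_Vs : W `<=` Vs.
Proof. by move=> w hw; exists w, 0; rewrite scale0r addr0. Qed.

Lemma decomp_fun : exists f : E -> E * K, forall x, Vs x -> W (f x).1 /\ x = (f x).1 + (f x).2 *: e.
Proof.
have h : forall x, exists p : E * K, Vs x -> W p.1 /\ x = p.1 + p.2 *: e.
  move=> x; have [[w [c [hw hx]]]|hn] := pselect (Vs x).
    by exists (w, c).
  by exists (0, 0) => /hn.
have [f hf] := choice h; by exists f.
Qed.

Section Phi.
Variable f : E -> E * K.
Hypothesis hf : forall x, Vs x -> W (f x).1 /\ x = (f x).1 + (f x).2 *: e.
Definition phi x := (f x).2.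

Lemma phi_eq w c : W w -> phi (w + c *: e) = c.
Proof.
move=> hw; have hv : Vs (w + c *: e) by exists w, c.
have [h1 h2] := hf hv.
by rewrite /phi; have [-> _] := coef_unique h1 hw (esym h2).
Qed.

Lemma phi_dec x : Vs x -> exists w, W w /\ x = w + phi x *: e.
Proof. by move=> /hf [h1 h2]; exists (f x).1. Qed.

Lemma phiW w : W w -> phi w = 0.
Proof. by move=> hw; have := phi_eq 0 hw; rewrite scale0r addr0. Qed.

Lemma phi0W x : Vs x -> phi x = 0 -> W x.
Proof. by move=> hx h0; have [w [hw ->]] := phi_dec hx; rewrite h0 scale0r addr0. Qed.

Lemma phiD x y : Vs x -> Vs y -> phi (x + y) = phi x + phi y.
Proof.
move=> /phi_dec [w1 [h1 e1]] /phi_dec [w2 [h2 e2]].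
rewrite {1}e1 {1}e2 addrACA -scalerDl; apply: phi_eq; exact: lsD.
Qed.

Lemma phiZ a x : Vs x -> phi (a *: x) = a * phi x.
Proof.
move=> /phi_dec [w1 [h1 e1]].
rewrite {1}e1 scalerDr scalerA; apply: phi_eq; exact: lsZ.
Qed.

Lemma phiN x : Vs x -> phi (- x) = - phi x.
Proof. by move=> hx; rewrite -scaleN1r phiZ // mulN1r. Qed.

Lemma phiB x y : Vs x -> Vs y -> phi (x - y) = phi x - phi y.
Proof. by move=> hx hy; rewrite phiD ?phiN //; apply: lsN => //; exact: Vs_ls. Qed.

Lemma phi_bound x : Vs x -> abs (phi x) * d <= nrm x.
Proof. by move=> /phi_dec [w [hw {2}->]]; apply: keyL. Qed.

End Phi.

Lemma e_pos : 0 < nrm e.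
Proof. have h := hdist (ls0 hW); rewrite subr0 in h; exact: lt_le_trans hd h. Qed.

Lemma step_complete : completeS Vs.
Proof.
move=> u hu hcu.
have [f hf] := decomp_fun.
pose c k := phi f (u k).
have hcc : forall eps, 0 < eps -> exists N, forall m n, (N <= m)%N -> (N <= n)%N ->
    abs (c m - c n) < eps.
  move=> eps he; have [N hN] := hcu (eps * d) (mulr_gt0 he hd); exists N => m n hm hn.
  have := phi_bound hf (lsB Vs_ls (hu m) (hu n)); rewrite phiB // => hb.
  have := hN m n hm hn => hlt.
  by rewrite -(ltr_pM2r hd); apply: le_lt_trans hb hlt.
have [xi hxi] := hcompK hcc.
pose w k := u k - c k *: e.
have eV : Vs e by exists 0, 1; rewrite scale1r add0r; split => //; exact: ls0.
have hwW : forall k, W (w k).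
  move=> k.
  have hv : Vs (w k).
    apply: lsB; [exact: Vs_ls| exact: hu|]; apply: lsZ; [exact: Vs_ls| exact: eV].
  apply: (phi0W hf) => //.
  rewrite /w phiB //; last by apply: lsZ; [exact: Vs_ls| exact: eV].
  rewrite phiZ // -[e]add0r -[e]scale1r phi_eq ?mulr1 ?subrr //; exact: ls0.
have hwc : cauchyE w.
  move=> eps he.
  have he2 : 0 < eps / (nrm e + 1) by apply: divr_gt0 => //; have := e_pos; lra.
  have [N1 hN1] := hcu eps he; have [N2 hN2] := hcc _ he2.
  exists (maxn N1 N2) => m n hm hn.
  have -> : w m - w n = (u m - u n) + - ((c m - c n) *: e).
    by rewrite /w subr_pair -scalerBl.
  apply: nrmD_lt.
    by apply: hN1; lia.
  rewrite nrmN nrmZ; apply: small_mul => //; first exact: nrm_ge0.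
  by apply: hN2; lia.
have [om [hom hcw]] := hWc hwW hwc.
exists (om + xi *: e); split; first by exists om, xi.
move=> eps he.
have he2 : 0 < eps / (nrm e + 1) by apply: divr_gt0 => //; have := e_pos; lra.
have [N1 hN1] := hcw eps he; have [N2 hN2] := hxi _ he2.
exists (maxn N1 N2) => n hn.
rewrite -(sub3 _ (c n *: e)) -/(w n) -scalerBl.
apply: nrmD_lt; first by apply: hN1; lia.
rewrite nrmZ; apply: small_mul => //; first exact: nrm_ge0.
by apply: hN2; lia.
Qed.

Lemma eV : Vs e.
Proof. by exists 0, 1; rewrite scale1r add0r; split => //; exact: ls0. Qed.

Lemma step_closed : (forall M, aconv M -> M `<=` W -> closedS M) ->
  forall M, aconv M -> M `<=` Vs -> closedS M.
Proof.
move=> IH M hM hMV u x hu hux.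
have [l [hl hul]] := step_complete (fun k => hMV _ (hu k)) (cvg_cauchy hux).
have hxV : Vs x by rewrite (cvg_unique hux hul).
have [f hf] := decomp_fun.
pose c k := phi f (u k); pose xi := phi f x.
have huV : forall k, Vs (u k) by move=> k; apply: hMV; exact: hu.
have hcx : forall eps, 0 < eps -> exists N, forall n, (N <= n)%N -> abs (c n - xi) < eps.
  move=> eps he; have [N hN] := hux (eps * d) (mulr_gt0 he hd); exists N => n hn.
  have := phi_bound hf (lsB Vs_ls (huV n) hxV); rewrite phiB // => hb.
  by rewrite -(ltr_pM2r hd); apply: le_lt_trans hb (hN n hn).
pose M' := M `&` W.
have hM' : aconv M' := aconv_inter hM (ls_ac hW).
have cM' := IH M' hM' (fun z hz => proj2 hz).
have G : forall m0 K0, M m0 -> phi f m0 != 0 ->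
    (forall k, (K0 <= k)%N -> abs (c k) <= abs (phi f m0)) -> abs xi <= abs (phi f m0) -> M x.
  move=> m0 K0 hm0 hc0 hk hxi.
  have hm0V : Vs m0 by apply: hMV.
  move: hk hxi; set c0 := phi f m0 => hk hxi.
  have hc0p := abs_neq0 hc0.
  pose v k := u (k + K0)%N - (c (k + K0)%N / c0) *: m0.
  have hvM' : forall k, M' (v k).
    move=> k; split.
      apply: acB; [exact: hM| exact: hu| ].
      apply: acZ => //; rewrite absM absV ler_pdivrMr // mul1r; apply: hk; lia.
    apply: (phi0W hf).
      by apply: lsB; [exact: Vs_ls|exact: huV|apply: lsZ; [exact: Vs_ls|exact: hm0V]].
    rewrite /v phiB //; last by apply: lsZ; [exact: Vs_ls|exact: hm0V].
    by rewrite phiZ // -/c0 mulfVK // subrr.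
  have hvc : cvgE v (x - (xi / c0) *: m0).
    move=> eps he.
    have hnp : 0 < nrm m0 + 1 by have := nrm_ge0 m0; lra.
    have he2 : 0 < eps / (nrm m0 + 1) * abs c0 by apply: mulr_gt0 => //; apply: divr_gt0.
    have [N1 hN1] := hux eps he; have [N2 hN2] := hcx _ he2.
    exists (maxn N1 N2) => n hn.
    rewrite /v subr_pair -scalerBl -mulrBl.
    apply: nrmD_lt; first by apply: hN1; lia.
    rewrite nrmN nrmZ absM absV; apply: small_mul => //; first exact: nrm_ge0.
    rewrite ltr_pdivrMr //; apply: hN2; lia.
  have hM'x := cM' v _ hvM' hvc.
  have -> : x = (x - (xi / c0) *: m0) + (xi / c0) *: m0 by rewrite subrK.
  apply: acD => //; first exact: (proj1 hM'x).
  by apply: acZ => //; rewrite absM absV ler_pdivrMr // mul1r.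
have [xi0|xin0] := eqVneq xi 0.
  have [hall|hex] := pselect (forall k, c k = 0).
    have hM'u : forall k, M' (u k).
      move=> k; split; first exact: hu.
      by apply: (phi0W hf) => //; exact: hall.
    exact: (proj1 (cM' u x hM'u hux)).
  move/existsNP: hex => [k0 /eqP hk0].
  have [N hN] := hcx _ (abs_neq0 hk0).
  apply: (G (u k0) N (hu k0) hk0).
    by move=> k hk; apply: ltW; have := hN k hk; rewrite xi0 subr0.
  by rewrite xi0 abs0; exact: abs_ge0.
have hxip := abs_neq0 xin0.
have [N hN] := hcx _ hxip.
have hcN : forall k, (N <= k)%N -> abs (c k) = abs xi.
  by move=> k hk; apply: abs_eq_of_lt; apply: hN.
have hcN0 : c N != 0.
  by apply/eqP => h0; have := hcN N (leqnn N); rewrite h0 abs0 => h; rewrite h ltxx in hxip.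
apply: (G (u N) N (hu N) hcN0).
  by move=> k hk; rewrite -/(c N) (hcN k hk) (hcN N (leqnn N)).
by rewrite -/(c N) (hcN N (leqnn N)).
Qed.

Lemma step_decomp : (forall M, aconv M -> M `<=` W -> closedS M) -> decompP W -> decompP Vs.
Proof.
move=> IH2 IH3 M hM hMV.
have hclV := step_closed IH2.
have [f hf] := decomp_fun.
pose M' := M `&` W.
have hM' : aconv M' := aconv_inter hM (ls_ac hW).
have [B' [hB'a hB'c [k' [t' [hD'M' hM'D']]]]] := IH3 M' hM' (fun z hz => proj2 hz).
have hD'M : spn k' t' `<=` M := fun z hz => proj1 (hD'M' z hz).
have hD'W : spn k' t' `<=` W := fun z hz => proj2 (hD'M' z hz).
have hD'ls := spn_ls k' t'.
have hMV' : forall m, M m -> Vs m by move=> m hm; apply: hMV.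
have hM'of : forall m, M m -> phi f m = 0 -> M' m.
  by move=> m hm h0; split => //; apply: (phi0W hf) => //; exact: hMV'.
have [hall|hex] := pselect (forall m, M m -> phi f m = 0).
  exists B'; split => //; exists k', t'; split => //.
  by move=> m hm; apply: hM'D'; apply: hM'of => //; exact: hall.
move/existsNP: hex => [m0 /not_implyP [hm0 /eqP hc0]].
have hm0V := hMV' _ hm0.
move: hc0; set c0 := phi f m0 => hc0.
have hc0p := abs_neq0 hc0.
have [[Rb hRb]|hunb] := pselect (exists Rb, forall m, M m -> abs (phi f m) <= Rb).
  have hRb0 : 0 <= Rb by apply: le_trans (hRb _ (ac0 hM)); exact: abs_ge0.
  have [N hN] := geo (abs_ge0 pi) hpi1 (Rb + 1) hc0p.
  pose lam := (pi ^+ N)^-1.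
  have hpN : pi ^+ N != 0 by rewrite expf_neq0 //; apply/eqP => h0; move: hpi0; rewrite h0 abs0 ltxx.
  have hlam0 : lam != 0 by rewrite invr_eq0.
  have hPp := pipow_gt0 N; have hP1 := pipow_le1 N.
  have habslam : abs lam = (abs pi ^+ N)^-1 by rewrite /lam absV absX.
  have hlam1 : 1 <= abs lam by rewrite habslam invf_ge1.
  have hrep : forall m, M m -> exists a b dd, [/\ abs a <= 1, B' b, spn k' t' dd &
      m = a *: (lam *: m0) + lam *: b + dd].
    move=> m hm; have hmV := hMV' _ hm.
    set x := phi f m.
    have hxb : abs (x / c0) <= abs lam.
      rewrite absM absV habslam ler_pdivrMr // -ler_pdivrMl ?invr_gt0 // invrK.
      have := hRb _ hm; rewrite -/x => hx.
      have := abs_ge0 x; nra.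
    have hal : abs (x / c0 / lam) <= 1.
      by rewrite absM absV ler_pdivrMr ?mul1r //; apply: abs_neq0.
    have [hxs|hxl] := lerP (abs x) (abs c0).
      have hm1 : M' (m - (x / c0) *: m0).
        apply: hM'of.
          apply: acB => //; apply: acZ => //.
          by rewrite absM absV ler_pdivrMr // mul1r.
        rewrite phiB //; last by apply: lsZ; [exact: Vs_ls|].
        by rewrite phiZ // -/c0 mulfVK // subrr.
      have [b1 [d1 [hb1 hd1 he1]]] := hM'D' _ hm1.
      exists (x / c0 / lam), (lam^-1 *: b1), d1; split => //.
        apply: acZ => //; rewrite absV invf_le1 //; exact: abs_neq0.
      rewrite !scalerA mulfVK // mulfV // scale1r -addrA -he1.
      by rewrite addrC subrK.
    have hx0 : x != 0 by apply/eqP => h0; move: hxl; rewrite h0 abs0 => h; have := abs_ge0 c0; lra.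
    have hm2 : M' (m0 - (c0 / x) *: m).
      apply: hM'of.
        apply: acB => //; apply: acZ => //.
        by rewrite absM absV ler_pdivrMr ?mul1r ?abs_neq0 //; exact: ltW.
      rewrite phiB //; last by apply: lsZ; [exact: Vs_ls|].
      by rewrite phiZ // -/x mulfVK // subrr.
    have [b2 [d2 [hb2 hd2 he2]]] := hM'D' _ hm2.
    exists (x / c0 / lam), (- (x / c0 / lam) *: b2), (- (x / c0) *: d2); split => //.
        apply: acZ => //; by rewrite absN.
      by apply: lsZ.
    have hmm : m = (x / c0) *: (m0 - (m0 - (c0 / x) *: m)).
      by rewrite subKr scalerA mulrA mulfVK // mulfV // scale1r.
    rewrite {1}hmm he2 !scalerA mulfVK // mulrN [lam * _]mulrC mulfVK //.
    by rewrite !scaleNr scalerBr scalerDr opprD addrA.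
  exists (msum [set y | exists a, abs a <= 1 /\ y = a *: (lam *: m0)]
               [set y | exists b, B' b /\ y = lam *: b]); split.
  - by apply: aconv_msum; [exact: aconv_seg| exact: aconv_scale].
  - by apply: cpt_sum; [exact: cpt_seg| exact: cpt_scale].
  exists k', t'; split => // m /hrep [a [b [dd [ha hb hdd ->]]]].
  by exists (a *: (lam *: m0) + lam *: b), dd; split => //; exists (a *: (lam *: m0)), (lam *: b); split => //; [exists a| exists b].
have hunb' : forall Rb, exists m, M m /\ Rb < abs (phi f m).
  move=> Rb; apply: contrapT => hn; apply: hunb; exists Rb => m hm.
  rewrite leNgt; apply/negP => hlt; apply: hn; by exists m.
have hms : forall k, exists m, M m /\ abs c0 <= abs pi ^+ k * abs (phi f m).
  move=> k; have [m [hm hlt]] := hunb' (abs c0 / abs pi ^+ k); exists m; split => //.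
  by move: hlt; rewrite ltr_pdivrMr ?pipow_gt0 // mulrC => h; exact: ltW h.
have [ms hms'] := choice hms.
pose x k := phi f (ms k).
have hmsM : forall k, M (ms k) := fun k => proj1 (hms' k).
have hxb : forall k, abs c0 <= abs pi ^+ k * abs (x k) := fun k => proj2 (hms' k).
have hx0 : forall k, x k != 0.
  move=> k; apply/eqP => h0; have := hxb k; rewrite h0 abs0 mulr0 => h; lra.
pose g k := (x k)^-1 *: ms k.
have hgV : forall k, Vs (g k) by move=> k; apply: lsZ; [exact: Vs_ls| exact: hMV'].
have hphig : forall k, phi f (g k) = 1.
  move=> k; have hv := hMV' _ (hmsM k).
  by rewrite /g phiZ // mulVf //; exact: hx0.
have PL : forall m1 m2, M m1 -> M m2 -> phi f m1 != 0 -> abs (phi f m1) <= abs (phi f m2) ->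
   M' (m1 - (phi f m1 / phi f m2) *: m2) /\
   (phi f m1)^-1 *: m1 - (phi f m2)^-1 *: m2 = (phi f m1)^-1 *: (m1 - (phi f m1 / phi f m2) *: m2).
  move=> m1 m2 h1 h2 hne hle.
  have hne2 : phi f m2 != 0.
    apply/eqP => h0; move: hle; rewrite h0 abs0 => h; have := abs_neq0 hne; lra.
  split.
    apply: hM'of.
      apply: acB => //; apply: acZ => //.
      by rewrite absM absV ler_pdivrMr ?mul1r //; exact: abs_neq0.
    have hV1 := hMV' _ h1; have hV2 := hMV' _ h2.
    rewrite phiB //; last by apply: lsZ; [exact: Vs_ls| exact: hV2].
    by rewrite phiZ // mulfVK // subrr.
  by rewrite scalerBr scalerA mulrA mulVf // mul1r.
have [rho [hrho hrhoB]] := cpt_bounded hB'c.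
pose C := rho / abs c0.
have hC : C * abs c0 = rho by rewrite /C mulfVK // gt_eqF.
have hC0 : 0 <= C by rewrite /C; apply: divr_ge0; [exact: ltW| exact: abs_ge0].
have hstep : forall k, exists p : E * E, [/\ spn k' t' p.2, g k - g k.+1 = p.1 + p.2 &
    nrm p.1 <= C * abs pi ^+ k].
  move=> k.
  have [mu [m' [hm' heq hmu]]] : exists mu m', [/\ M' m', g k - g k.+1 = mu *: m' &
      abs mu * abs c0 <= abs pi ^+ k].
    have [hle|hlt] := lerP (abs (x k)) (abs (x k.+1)).
      have [hPL1 hPL2] := PL _ _ (hmsM k) (hmsM k.+1) (hx0 k) hle.
      exists (x k)^-1, (ms k - (x k / x k.+1) *: ms k.+1); split => //.
      by rewrite absV mulrC ler_pdivrMr ?abs_neq0 //; exact: hxb.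
    have [hPL1 hPL2] := PL _ _ (hmsM k.+1) (hmsM k) (hx0 k.+1) (ltW hlt).
    exists (- (x k.+1)^-1), (ms k.+1 - (x k.+1 / x k) *: ms k); split => //.
      by rewrite -opprB /g hPL2 scaleNr.
    rewrite absN absV mulrC ler_pdivrMr ?abs_neq0 //.
    apply: le_trans (hxb k.+1) _; apply: ler_wpM2r; first exact: abs_ge0.
    exact: pipow_mono.
  have [b [dd [hb hdd he]]] := hM'D' _ hm'.
  exists (mu *: b, mu *: dd); split => /=.
  - exact: lsZ.
  - by rewrite heq he scalerDr.
  - rewrite nrmZ.
    have hnb := hrhoB _ hb; have hnb0 := nrm_ge0 b; have hmu0 := abs_ge0 mu.
    have h1 : abs mu * nrm b <= abs mu * rho by apply: ler_wpM2l => //; exact: ltW.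
    have h2 : abs mu * rho <= C * abs pi ^+ k.
      by rewrite -hC mulrCA; apply: ler_wpM2l.
    exact: le_trans h1 h2.
have [p hp] := choice hstep.
pose bs k := (p k).1; pose ds k := (p k).2.
have hds : forall k, spn k' t' (ds k) by move=> k; have [] := hp k.
have hgeq : forall k, g k - g k.+1 = bs k + ds k by move=> k; have [] := hp k.
have hbs : forall k, nrm (bs k) <= C * abs pi ^+ k by move=> k; have [] := hp k.
pose h k := g k + \sum_(j < k) ds j.
have hrec : forall k, h k.+1 = h k - bs k.
  move=> k; rewrite /h big_ord_recr /=.
  have -> : g k.+1 = g k - (bs k + ds k) by rewrite -hgeq subKr.
  by rewrite subr_rec.
have hbound : forall k i, nrm (h (k + i)%N - h k) <= C * abs pi ^+ k.
  move=> k; elim=> [|i ih]; first by rewrite addn0 subrr nrm0; apply: mulr_ge0 => //; exact: ltW (pipow_gt0 k).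
  rewrite addnS hrec addrAC; apply: nrmD_le => //.
  rewrite nrmN; apply: le_trans (hbs _) _; apply: ler_wpM2l => //; apply: pipow_mono; lia.
have hcau : cauchyE h.
  move=> eps he; have [N hN] := geo (abs_ge0 pi) hpi1 C he.
  exists N => m n hm hn.
  have -> : h m - h n = (h m - h N) - (h n - h N) by rewrite subr_pair subrr subr0.
  have em : m = (N + (m - N))%N by rewrite subnKC.
  have en : n = (N + (n - N))%N by rewrite subnKC.
  apply: nrmD_lt; first by rewrite em; exact: le_lt_trans (hbound _ _) hN.
  by rewrite nrmN en; exact: le_lt_trans (hbound _ _) hN.
have hsumD : forall k, spn k' t' (\sum_(j < k) ds j).
  by move=> k; apply: ls_sum => // j _; exact: hds.
have hhV : forall k, Vs (h k).
  by move=> k; apply: lsD; [exact: Vs_ls| exact: hgV| apply: W_Vs; apply: hD'W; exact: hsumD].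
have hphih : forall k, phi f (h k) = 1.
  move=> k; rewrite phiD //; last by apply: W_Vs; apply: hD'W; exact: hsumD.
  by rewrite hphig phiW ?addr0 //; apply: hD'W; exact: hsumD.
have [beta [hbV hbc]] := step_complete hhV hcau.
have hphib : phi f beta = 1.
  apply/eqP; rewrite eq_sym -subr_eq0; apply/eqP/abs_eq0.
  apply: real_small0; first exact: abs_ge0.
  move=> eps he; have [N hN] := hbc (eps * d) (mulr_gt0 he hd).
  have := phi_bound hf (lsB Vs_ls (hhV N) hbV); rewrite phiB // hphih => hb.
  by rewrite -(ltr_pM2r hd); apply: le_lt_trans hb (hN N (leqnn N)).
have hline : forall a, M (a *: beta).
  move=> a; have [->|ha] := eqVneq a 0; first by rewrite scale0r; exact: ac0.
  have [K0 hK0] := geo (abs_ge0 pi) hpi1 (abs a) hc0p.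
  have hak : forall k, (K0 <= k)%N -> abs a <= abs (x k).
    move=> k hk; have h1 := pipow_mono hk; have h2 := hxb k; have hPk := pipow_gt0 k.
    have h3 : abs a * abs pi ^+ k < abs pi ^+ k * abs (x k).
      apply: le_lt_trans _ (lt_le_trans hK0 h2); apply: ler_wpM2l => //; exact: abs_ge0.
    apply: ltW; by rewrite -(ltr_pM2l hPk) mulrC.
  pose v n := a *: h (n + K0)%N.
  have hvM : forall n, M (v n).
    move=> n; rewrite /v /h scalerDr; apply: acD => //.
      rewrite /g scalerA; apply: acZ => //.
      by rewrite absM absV ler_pdivrMr ?abs_neq0 // mul1r; apply: hak; lia.
    by apply: hD'M; apply: lsZ => //; exact: hsumD.
  have hvc : cvgE v (a *: beta).
    move=> eps he; have [N hN] := hbc (eps / abs a) (divr_gt0 he (abs_neq0 ha)).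
    exists N => n hn; rewrite /v -scalerBr nrmZ mulrC -ltr_pdivlMr ?abs_neq0 //; apply: hN; lia.
  exact: (hclV M hM hMV v _ hvM hvc).
pose t'' j := if (j < k')%N then t' j else beta.
have hspn : forall z, spn k'.+1 t'' z <-> exists w c, spn k' t' w /\ z = w + c *: beta.
  move=> z; rewrite spn_rec (@spn_ext k' t'' t'); last by move=> i hi; rewrite /t'' hi.
  by rewrite /t'' ltnn.
exists B'; split => //; exists k'.+1, t''; split.
  by move=> z /hspn [w [c [hw ->]]]; apply: acD; [exact: hM| exact: hD'M| exact: hline].
move=> m hm.
have hmb : M' (m - phi f m *: beta).
  apply: hM'of; first by apply: acB => //; exact: hline.
  rewrite phiB ?phiZ ?hphib ?mulr1 ?subrr //; first exact: hMV'.
  by apply: lsZ; [exact: Vs_ls|].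
have [b [dd [hb hdd he]]] := hM'D' _ hmb.
exists b, (dd + phi f m *: beta); split => //.
  by apply/hspn; exists dd, (phi f m).
by rewrite addrA -he subrK.
Qed.

End Step.

Definition Qset (V : set E) := [/\ completeS V, forall M, aconv M -> M `<=` V -> closedS M & decompP V].

Lemma dist_pos (W : set E) e : completeS W -> ~ W e -> exists d, 0 < d /\ forall w, W w -> d <= nrm (e - w).
Proof.
move=> hWc he; apply: contrapT => hn; apply: he; apply: (closed_of_complete hWc) => eps heps.
apply: contrapT => hn2; apply: hn; exists eps; split => // w hw.
rewrite leNgt; apply/negP => hlt; apply: hn2; by exists w.
Qed.

Lemma spn0E s x : spn 0 s x <-> x = 0.
Proof. by split; [move=> [c ->]; rewrite big_ord0| move=> ->; exists (fun _ => 0); rewrite big_ord0]. Qed.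

Lemma Q0 s : Qset (spn 0 s).
Proof.
split.
- move=> u hu _; exists 0; split; first exact/spn0E.
  by move=> eps he; exists 0%N => n _; rewrite ((spn0E _ _).1 (hu n)) subr0 nrm0.
- move=> M hM hMV u x hu hux.
  have hx : x = 0.
    apply: small0 => eps he; have [N hN] := hux eps he.
    by have := hN N (leqnn N); rewrite ((spn0E _ _).1 (hMV _ (hu N))) add0r nrmN.
  by rewrite hx; exact: ac0.
- move=> M hM hMV; exists M; split => //.
    move=> eps he; exists 0%N, s => b hb; exists 0, 0; split.
    + by rewrite nrm0.
    + by exists (fun _ => 0); rewrite big_ord0; split => // _; rewrite abs0 ler01.
    + by rewrite ((spn0E _ _).1 (hMV _ hb)) addr0.
  exists 0%N, s; split.
    by move=> z /spn0E ->; exact: ac0.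
  by move=> m hm; exists m, 0; split => //; [exact/spn0E| rewrite addr0].
Qed.

Lemma Qstep n s : Qset (spn n s) -> Qset (spn n.+1 s).
Proof.
move=> [h1 h2 h3].
have hW := spn_ls n s.
have hsplit : spn n.+1 s = Vs (spn n s) (s n).
  by rewrite predeqE => x; rewrite spn_rec.
have [hin|hout] := pselect (spn n s (s n)).
  have -> : spn n.+1 s = spn n s.
    rewrite predeqE => x; split; last exact: spn_mono.
    by move/spn_rec => [w [c [hw ->]]]; apply: lsD => //; apply: lsZ.
  by split.
have [d [hd hdist]] := dist_pos h1 hout.
rewrite hsplit; split.
- exact: (step_complete hW h1 hd hdist).
- exact: (step_closed hW h1 hd hdist h2).
- exact: (step_decomp hW h1 hd hdist h2 h3).
Qed.

Lemma Qall n s : Qset (spn n s).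
Proof. elim: n => [|n ih]; [exact: Q0| exact: Qstep]. Qed.

Lemma pi_neq0 : pi != 0.
Proof. by apply/eqP => h0; move: hpi0; rewrite h0 abs0 ltxx. Qed.
Lemma piX_neq0 m : pi ^+ m != 0.
Proof. by rewrite expf_neq0 // pi_neq0. Qed.

Lemma argmax (g : nat -> R) n : exists j, (j < n.+1)%N /\ forall i, (i < n.+1)%N -> g i <= g j.
Proof.
elim: n => [|n [j [hj hg]]]; first by exists 0%N; split => // i; rewrite ltnS leqn0 => /eqP ->.
have [hle|hlt] := lerP (g n.+1) (g j).
  exists j; split; first by lia.
  move=> i; rewrite ltnS leq_eqVlt => /orP[/eqP ->|]; first by [].
  exact: hg.
exists n.+1; split => // i; rewrite ltnS leq_eqVlt => /orP[/eqP -> //|hi].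
exact: le_trans (hg i hi) (ltW hlt).
Qed.

Lemma normalize y rho : y != 0 -> 0 < rho ->
  exists lam : K, [/\ lam != 0, abs pi * rho <= abs lam * nrm y & abs lam * nrm y < rho].
Proof.
move=> hy hr; have hY := nrm_pos hy.
have [N hN] := geo (abs_ge0 pi) hpi1 (nrm y) hr.
set z := nrm y * abs pi ^+ N.
have hz : 0 < z by apply: mulr_gt0 => //; exact: pipow_gt0.
have [i0 hi0] := geo (abs_ge0 pi) hpi1 rho hz.
have hex : exists i, rho * abs pi ^+ i <= z by exists i0; exact: ltW.
case: (ex_minnP hex) => i hi hmin.
case: i hi hmin => [|j] hi hmin.
  by move: hi; rewrite expr0 mulr1 => h; move: hN; rewrite -/z => h2; lra.
have hj : z < rho * abs pi ^+ j.
  by rewrite ltNge; apply/negP => h; have := hmin j h; rewrite ltnn.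
have hPj := pipow_gt0 j.
exists (pi ^+ N / pi ^+ j); split.
- by rewrite mulf_neq0 ?invr_eq0 ?piX_neq0.
- rewrite absM absV !absX mulrAC ler_pdivlMr //.
  have -> : abs pi ^+ N * nrm y = z by rewrite /z mulrC.
  apply: le_trans _ hi; rewrite exprS.
  by have -> : abs pi * rho * abs pi ^+ j = rho * (abs pi * abs pi ^+ j) by ring.
- rewrite absM absV !absX mulrAC ltr_pdivrMr //.
  by have -> : abs pi ^+ N * nrm y = z by rewrite /z mulrC.
Qed.

Definition tau (k : nat) : R := (1 + 2^-1 ^+ k) / 2.
Lemma tau_ge k : 2^-1 <= tau k.
Proof. have := half_pow_gt0 k; rewrite /tau; lra. Qed.
Lemma tau_le1 k : tau k <= 1.
Proof. have := exprn_ile1 k half_ge0 (ltW half_lt1); rewrite /tau; lra. Qed.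
Lemma tau_pos k : 0 < tau k.
Proof. have := tau_ge k; lra. Qed.
Lemma tau_dec k : tau k.+1 < tau k.
Proof. have := half_pow_gt0 k; rewrite /tau exprS; lra. Qed.

Lemma orth (Z : set E) z t a c : linear_subspace Z -> 0 < t -> t <= 1 ->
  (forall w, Z w -> t * nrm z <= nrm (z - w)) -> Z a ->
  t * nrm a <= nrm (a + c *: z) /\ t * (abs c * nrm z) <= nrm (a + c *: z).
Proof.
move=> hZ ht0 ht1 hz ha.
have o2 : t * (abs c * nrm z) <= nrm (a + c *: z).
  have [->|hc] := eqVneq c 0; first by rewrite abs0 mul0r mulr0; exact: nrm_ge0.
  have -> : a + c *: z = c *: (z - ((- c^-1) *: a)).
    by rewrite scalerBr scalerA mulrN mulfV // scaleN1r opprK addrC.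
  rewrite nrmZ mulrCA; apply: ler_wpM2l; first exact: abs_ge0.
  by apply: hz; apply: lsZ.
split => //.
have [hle|hlt] := lerP (nrm a) (abs c * nrm z).
  apply: le_trans o2; apply: ler_wpM2l => //; exact: ltW.
have : nrm a <= nrm (c *: z + a) by apply: nrm_ge_of_lt; rewrite nrmZ.
rewrite addrC => h; apply: le_trans h; apply: ler_piMl => //; exact: nrm_ge0.
Qed.

Section Step1.
Variable A : set E.
Hypothesis hA : aconv A.

Lemma Fchar x : lspan A x <-> exists m, A (pi ^+ m *: x).
Proof.
split.
  move=> [n [s [c [hs ->]]]].
  have [m hm] := geo (abs_ge0 pi) hpi1 (\sum_(i < n) abs (c i)) ltr01.
  exists m; rewrite scaler_sumr; apply: ac_sum => // i _; rewrite scalerA.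
  apply: acZ => //; rewrite absM absX; apply: ltW; apply: le_lt_trans hm.
  rewrite mulrC; apply: ler_wpM2r; first exact: ltW (pipow_gt0 m).
  rewrite (bigD1 i) //= lerDl; apply: sumr_ge0 => j _; exact: abs_ge0.
move=> [m hm]; exists 1%N, (fun _ => pi ^+ m *: x), (fun _ => (pi ^+ m)^-1); split.
  by [].
by rewrite big_ord1 scalerA mulVf ?scale1r // piX_neq0.
Qed.

Lemma pi_scale_A m k x : A (pi ^+ m *: x) -> A (pi ^+ (m + k) *: x).
Proof.
move=> h; rewrite exprD mulrC -scalerA; apply: acZ => //.
by rewrite absX; exact: pipow_le1.
Qed.

Lemma F_ls : linear_subspace (lspan A).
Proof.
split.
- by apply/Fchar; exists 0%N; rewrite scaler0; exact: ac0.
- move=> x y /Fchar [m hm] /Fchar [m' hm']; apply/Fchar; exists (m + m')%N.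
  rewrite scalerDr; apply: acD => //; first exact: pi_scale_A.
  by rewrite addnC; exact: pi_scale_A.
- move=> a x /Fchar [m hm]; apply/Fchar.
  have [j hj] := geo (abs_ge0 pi) hpi1 (abs a) ltr01.
  exists (m + j)%N; rewrite scalerA exprD mulrAC -mulrA mulrC -scalerA; apply: acZ => //.
  by rewrite absM absX; exact: ltW.
Qed.

Lemma A_F : A `<=` lspan A.
Proof. by move=> a ha; apply/Fchar; exists 0%N; rewrite expr0 scale1r. Qed.

Fixpoint bseq (G : nat * (E * R) -> E * R) (k : nat) : E * R :=
  match k with
  | 0%N => (0, 1)
  | k'.+1 => ((G (k', bseq G k')).1, Num.min (bseq G k').2 (G (k', bseq G k')).2 / 2)
  end.

Hypothesis hban : banach_subset nrm (lspan A).

Lemma baire : exists rho, 0 < rho /\ forall y, lspan A y -> nrm y < rho ->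
  forall delta, 0 < delta -> exists a, A a /\ nrm (y - a) < delta.
Proof.
apply: contrapT => hn.
have hbad : forall rho, 0 < rho -> exists y delta, [/\ lspan A y, nrm y < rho, 0 < delta &
    forall a, A a -> delta <= nrm (y - a)].
  move=> rho hr; apply: contrapT => hn2; apply: hn; exists rho; split => // y hy hyr delta hd.
  apply: contrapT => hn3; apply: hn2; exists y, delta; split => // a ha.
  rewrite leNgt; apply/negP => hlt; apply: hn3; by exists a.
have hstep : forall m x0 r, lspan A x0 -> 0 < r -> exists y delta, [/\ lspan A y, nrm (y - x0) < r,
    0 < delta & forall z, A (pi ^+ m *: z) -> delta <= nrm (y - z)].
  move=> m x0 r hx0 hr.
  have hPm := pipow_gt0 m.
  have [z0 [dl0 [hz0F hz0 hdl0 hz0A]]] := hbad (r * abs pi ^+ m) (mulr_gt0 hr hPm).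
  pose z' := (pi ^+ m)^-1 *: z0.
  pose dl := dl0 / abs pi ^+ m.
  have hdl : 0 < dl := divr_gt0 hdl0 hPm.
  have hz'F : lspan A z' by apply: lsZ => //; exact: F_ls.
  have hz'n : nrm z' < r.
    by rewrite nrmZ absV absX mulrC -ltr_pdivlMr ?invr_gt0 // invrK.
  have hz'far : forall z, A (pi ^+ m *: z) -> dl <= nrm (z' - z).
    move=> z hz; have := hz0A _ hz => h.
    have -> : z' - z = (pi ^+ m)^-1 *: (z0 - pi ^+ m *: z).
      by rewrite scalerBr scalerA mulVf ?piX_neq0 // scale1r.
    by rewrite nrmZ absV absX mulrC ler_pM2r ?invr_gt0.
  have [[a0 [ha0 ha0n]]|hno] := pselect (exists a0, A (pi ^+ m *: a0) /\ nrm (x0 - a0) < dl).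
    exists (x0 + z'), dl; split => //.
    - by apply: lsD => //; exact: F_ls.
    - by rewrite addrC addKr.
    - move=> z hz; rewrite leNgt; apply/negP => hlt.
      have hza : A (pi ^+ m *: (z - a0)) by rewrite scalerBr; apply: acB.
      have := hz'far _ hza.
      have -> : z' - (z - a0) = (x0 + z' - z) + (a0 - x0).
        by rewrite opprB [RHS]addrC !addrA subrK [z' + a0]addrC.
      move=> h; have : nrm (x0 + z' - z + (a0 - x0)) < dl.
        by apply: nrmD_lt => //; rewrite nrmB.
      by rewrite ltNge h.
  exists x0, dl; split => //; first by rewrite subrr nrm0.
  move=> z hz; rewrite leNgt; apply/negP => hlt; apply: hno; exists z; split => //.
have hstep' : forall (p : nat * (E * R)), exists q : E * R,
   (lspan A p.2.1 /\ 0 < p.2.2) -> [/\ lspan A q.1, nrm (q.1 - p.2.1) < p.2.2, 0 < q.2 &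
      forall z, A (pi ^+ p.1 *: z) -> q.2 <= nrm (q.1 - z)].
  move=> [m [x0 r]] /=; have [hh|hh] := pselect (lspan A x0 /\ 0 < r).
    by have [y [dl hy]] := hstep m x0 r hh.1 hh.2; exists (y, dl).
  by exists (0, 0) => /hh.
have [G hG] := choice hstep'.
pose X := bseq G.
pose x k := (X k).1; pose r k := (X k).2; pose dl k := (G (k, X k)).2.
have hinv : forall k, lspan A (x k) /\ 0 < r k.
  elim=> [|k [ih1 ih2]]; first by split; [exact: ls0 F_ls| rewrite /r /= ltr01].
  have [h1 h2 h3 h4] := hG (k, X k) (conj ih1 ih2).
  split; first exact: h1.
  rewrite /r /=; apply: divr_gt0 => //; rewrite lt_min; apply/andP; split => //.
have hfacts : forall k, [/\ nrm (x k.+1 - x k) < r k, 0 < dl k &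
    forall z, A (pi ^+ k *: z) -> dl k <= nrm (x k.+1 - z)].
  move=> k; have [ih1 ih2] := hinv k.
  by have [h1 h2 h3 h4] := hG (k, X k) (conj ih1 ih2); split.
have hr1 : forall k, r k.+1 <= r k / 2 /\ r k.+1 < dl k.
  move=> k; have [_ hdl _] := hfacts k; have [_ hrk] := hinv k.
  rewrite /r /=; split.
    by rewrite ler_pM2r ?invr_gt0 // ge_min lexx.
  rewrite -/(r k) -/(dl k); apply: le_lt_trans (_ : Num.min (r k) (dl k) / 2 <= dl k / 2) _.
    by rewrite ler_pM2r ?invr_gt0 // ge_min lexx orbT.
  lra.
have hrmono : forall k i, r (k + i)%N <= r k.
  move=> k; elim=> [|i ih]; first by rewrite addn0.
  rewrite addnS; apply: le_trans ih; have [h _] := hr1 (k + i)%N; have [_ hp] := hinv (k + i)%N; lra.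
have hrpow : forall k, r k <= 2^-1 ^+ k.
  elim=> [|k ih]; first by rewrite /r /= expr0.
  have [h _] := hr1 k; rewrite exprS; have := hinv k; lra.
have htail : forall k i, nrm (x (k + i)%N - x k) < r k.
  move=> k; elim=> [|i ih]; first by rewrite addn0 subrr nrm0; exact: (hinv k).2.
  rewrite addnS.
  have -> : x (k + i).+1 - x k = (x (k + i).+1 - x (k + i)%N) + (x (k + i)%N - x k).
    by rewrite addrA subrK.
  apply: nrmD_lt => //; have [h _ _] := hfacts (k + i)%N; apply: lt_le_trans h _; exact: hrmono.
have hcau : cauchyE x.
  move=> eps he; have [N hN] := half_pow_small he; exists N => m n hm hn2.
  have -> : x m - x n = (x m - x N) - (x n - x N) by rewrite subr_pair subrr subr0.
  have em : m = (N + (m - N))%N by rewrite subnKC.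
  have en : n = (N + (n - N))%N by rewrite subnKC.
  have hrN := hrpow N.
  apply: nrmD_lt; first by rewrite em; apply: lt_trans (htail _ _) _; lra.
  by rewrite nrmN en; apply: lt_trans (htail _ _) _; lra.
have [l [hlF hlc]] := hban (fun k => (hinv k).1) hcau.
have [m hm] := (Fchar l).1 hlF.
have [_ _ hfar] := hfacts m.
have hfl := hfar _ hm.
have [hr1a hr1b] := hr1 m.
have [N hN] := hlc (r m.+1) (hinv m.+1).2.
have hxl : nrm (x m.+1 - l) < r m.+1.
  have e : x m.+1 - l = (x m.+1 - x (m.+1 + N)%N) + (x (m.+1 + N)%N - l) by rewrite addrA subrK.
  rewrite e; apply: nrmD_lt; first by rewrite nrmB; exact: htail.
  by apply: hN; lia.
have : r m.+1 < nrm (x m.+1 - l) by apply: lt_le_trans hr1b hfl.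
by rewrite ltNge (ltW hxl).
Qed.

Hypothesis hlcA : local_compactoid abs nrm A.

Lemma approx : exists rho, 0 < rho /\ forall delta, 0 < delta -> exists n s',
  forall y, lspan A y -> nrm y < rho -> exists v, spn n s' v /\ nrm (y - v) < delta.
Proof.
have [rho [hrho hb]] := baire.
exists rho; split => // delta hd.
have hU : zero_nbhd nrm [set x | nrm x < delta] by exists delta; split.
have [n [s hs]] := hlcA.2 _ hU.
exists n, (ext s) => y hy hyr.
have [a [ha hya]] := hb y hy hyr delta hd.
have [u [v [hu hv hav]]] := hs a ha.
exists v; split; first exact: lspan_spn.
have -> : y - v = (y - a) + u by rewrite hav opprD addrA addrAC subrK.
exact: nrmD_lt.
Qed.

Lemma riesz k ys y' t rho : (forall i, (i < k)%N -> lspan A (ys i)) -> lspan A y' -> ~ spn k ys y' ->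
  0 < t -> t < 1 -> 0 < rho ->
  exists z, [/\ lspan A z, abs pi * rho <= nrm z, nrm z < rho &
     forall w, spn k ys w -> t * nrm z <= nrm (z - w)].
Proof.
move=> hys hy' hny' ht0 ht1 hr.
have [hZc _ _] := Qall k ys.
have [d0 [hd0 hdist]] := dist_pos hZc hny'.
pose S := [set r | exists w, spn k ys w /\ r = nrm (y' - w)].
have hS0 : S !=set0 by exists (nrm (y' - 0)), 0; split => //; exact: ls0 (spn_ls k ys).
have hSlb : lbound S d0 by move=> r [w [hw ->]]; exact: hdist.
have hSinf : has_inf S by split => //; exists d0.
have hdd : d0 <= inf S := lb_le_inf hS0 hSlb.
set dd := inf S in hdd.
have heps : 0 < dd / t - dd.
  have hddp : 0 < dd by exact: lt_le_trans hd0 hdd.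
  rewrite subr_gt0 ltr_pdivlMr //; nra.
have [r [w0 [hw0 ->]] hr0] := inf_adherent heps hSinf.
rewrite -/dd [dd + _]addrC subrK in hr0.
pose z0 := y' - w0.
have hZF : spn k ys `<=` lspan A := sub_spn (F_ls) hys.
have hz0F : lspan A z0 by apply: lsB; [exact: F_ls| | exact: hZF].
have hz0far : forall w, spn k ys w -> dd <= nrm (z0 - w).
  move=> w hw; rewrite /z0 -addrA -opprD.
  apply: ge_inf; first by exists d0.
  by exists (w0 + w); split => //; apply: lsD => //; exact: spn_ls.
have hz0 : z0 != 0.
  apply/eqP => h0; have := hz0far 0 (ls0 (spn_ls k ys)); rewrite h0 subr0 nrm0 => h; lra.
have htz0 : t * nrm z0 < dd by rewrite mulrC -ltr_pdivlMr.
clearbody z0.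
have [lam [hl0 hl1 hl2]] := normalize hz0 hr.
exists (lam *: z0); split.
- by apply: lsZ => //; exact: F_ls.
- by rewrite nrmZ.
- by rewrite nrmZ.
- move=> w hw.
  have -> : lam *: z0 - w = lam *: (z0 - lam^-1 *: w) by rewrite scalerBr scalerA mulfV // scale1r.
  rewrite !nrmZ mulrCA; apply: ler_wpM2l; first exact: abs_ge0.
  apply: le_trans (ltW htz0) _; apply: hz0far; apply: lsZ => //; exact: spn_ls.
Qed.

Lemma F_findim : exists k ys, (forall i, (i < k)%N -> lspan A (ys i)) /\ lspan A `<=` spn k ys.
Proof.
apply: contrapT => hn.
have hnot : forall k ys, (forall i, (i < k)%N -> lspan A (ys i)) -> exists y', lspan A y' /\ ~ spn k ys y'.
  move=> k ys hys; apply: contrapT => hn2; apply: hn; exists k, ys; split => // y hy.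
  apply: contrapT => hn3; apply: hn2; by exists y.
have [rho [hrho happ]] := approx.
pose delta := abs pi * rho / 4.
have hP : 0 < abs pi * rho by apply: mulr_gt0.
have hdel : 0 < delta by rewrite /delta; apply: divr_gt0.
have [n [s' hs']] := happ delta hdel.
have hbuild : forall k, exists ys : nat -> E,
   (forall i, (i < k)%N -> [/\ lspan A (ys i), abs pi * rho <= nrm (ys i) & nrm (ys i) < rho]) /\
   forall (c : nat -> K) j, (j < k)%N -> tau k * (abs (c j) * nrm (ys j)) <= nrm (\sum_(i < k) c i *: ys i).
  elim=> [|k [ys [hys hineq]]].
    by exists (fun _ => 0); split.
  have hysF : forall i, (i < k)%N -> lspan A (ys i) by move=> i hi; have [] := hys i hi.
  have [y' [hy'F hy'n]] := hnot k ys hysF.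
  pose t := tau k.+1 / tau k.
  have ht0 : 0 < t by apply: divr_gt0; apply: tau_pos.
  have ht1 : t < 1 by rewrite /t ltr_pdivrMr ?tau_pos // mul1r; exact: tau_dec.
  have [z [hzF hz1 hz2 hzorth]] := riesz hysF hy'F hy'n ht0 ht1 hrho.
  exists (fun i => if i == k then z else ys i); split.
    move=> i hi; case: eqP => [_|hne]; first by split.
    apply: hys; lia.
  move=> c j hj.
  rewrite big_ord_recr /= eqxx.
  have -> : \sum_(i < k) c (widen_ord (leqnSn k) i) *:
      (if nat_of_ord (widen_ord (leqnSn k) i) == k then z else ys (widen_ord (leqnSn k) i)) =
      \sum_(i < k) c i *: ys i.
    by apply: eq_bigr => i _ /=; rewrite ltn_eqF.
  set a := \sum_(i < k) c i *: ys i.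
  have haZ : spn k ys a by exists c.
  have [o1 o2] := orth (c k) (spn_ls k ys) ht0 (ltW ht1) hzorth haZ.
  have htau : tau k.+1 = t * tau k by rewrite /t mulfVK // gt_eqF // tau_pos.
  have [hjk|hjk] := ltnP j k.
    rewrite (ltn_eqF hjk) htau -mulrA.
    apply: le_trans o1; apply: ler_wpM2l; first exact: ltW.
    exact: hineq.
  have -> : j = k by lia.
  rewrite eqxx htau; apply: le_trans o2; rewrite -mulrA; apply: ler_wpM2l; first exact: ltW.
  apply: ler_piMl; last exact: tau_le1.
  by apply: mulr_ge0; [exact: abs_ge0| exact: nrm_ge0].
have [ys [hys hineq]] := hbuild n.+1.
have hv : forall i, exists v, (i < n.+1)%N -> spn n s' v /\ nrm (ys i - v) < delta.
  move=> i; case: (ltnP i n.+1) => hi; last by exists 0.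
  have [hF h1 h2] := hys i hi; have [v hv] := hs' (ys i) hF h2; by exists v.
have [vv hvv] := choice hv.
have [c [[j0 [hj0 hc0]] hsum]] := dependence (fun i hi => (hvv i hi).1).
have [j [hj hmax]] := argmax (fun i => abs (c i)) n.
have hcj : c j != 0.
  apply/eqP => h0; have := hmax j0 hj0; rewrite /= h0 abs0 => h.
  by have := abs_neq0 hc0; lra.
pose c' i := c i / c j.
have hc'1 : forall i, (i < n.+1)%N -> abs (c' i) <= 1.
  by move=> i hi; rewrite absM absV ler_pdivrMr ?abs_neq0 // mul1r; exact: hmax.
have e1 : \sum_(i < n.+1) c' i *: vv i = 0.
  have : (c j)^-1 *: \sum_(i < n.+1) c i *: vv i = 0 by rewrite hsum scaler0.
  rewrite scaler_sumr => h; rewrite -[RHS]h; apply: eq_bigr => i _.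
  by rewrite scalerA mulrC.
have e2 : \sum_(i < n.+1) c' i *: ys i = \sum_(i < n.+1) c' i *: (ys i - vv i) + \sum_(i < n.+1) c' i *: vv i.
  by rewrite -big_split; apply: eq_bigr => i _ /=; rewrite -scalerDr subrK.
have hup : nrm (\sum_(i < n.+1) c' i *: ys i) < delta.
  rewrite e2 e1 addr0; apply: nrm_sum_lt => // i _.
  rewrite nrmZ; apply: le_lt_trans (_ : _ <= nrm (ys i - vv i)) _.
    by apply: ler_piMl; [exact: nrm_ge0| exact: hc'1].
  exact: (proj2 (hvv i (ltn_ord i))).
have hlow := hineq c' j hj.
have hc'j : abs (c' j) = 1 by rewrite /c' mulfV // abs1.
rewrite hc'j mul1r in hlow.
have [_ hyj _] := hys j hj.
have htg := tau_ge n.+1.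
have hnn : 0 <= nrm (ys j) by exact: nrm_ge0.
have : 2^-1 * (abs pi * rho) <= tau n.+1 * nrm (ys j).
  by apply: ler_pM => //; [exact: half_ge0| exact: ltW].
move: hup hlow; rewrite /delta; lra.
Qed.

Lemma final : exists B D, [/\ compactoid abs nrm B, linear_subspace D, finite_type abs nrm D & A = msum B D].
Proof.
have [k [ys [hys hF]]] := F_findim.
have [_ _ hdec] := Qall k ys.
have [B [hBa hBc [k2 [t [htA hAB]]]]] := hdec A hA (fun a ha => hF _ (A_F ha)).
exists (B `&` A), (spn k2 t); split.
- split; first exact: aconv_inter.
  move=> U [eps [he hU]]; have [n [s hs]] := hBc eps he.
  exists n, (fun i : 'I_n => s i) => b [hb _]; have [u [v [hu [c [hc hv]] ->]]] := hs b hb.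
  exists u, v; split => //; first exact: hU.
  by exists n, (fun i : 'I_n => s i), (fun i : 'I_n => c i); split => // i; exists i.
- exact: spn_ls.
- move=> p [hp1 hp2 hp3 hp4]; exists k2, (fun i : 'I_k2 => t i); split.
    by move=> i; apply: spn_gen.
  move=> x hx; exists x; split; first exact: spn_lspan.
  have := hp2 0 0 (ls0 (spn_ls k2 t)); rewrite scale0r abs0 mul0r => h.
  by rewrite subrr.
- rewrite predeqE => x; split.
    move=> hx; have [b [dd [hb hdd hxe]]] := hAB x hx.
    rewrite hxe in hx; rewrite hxe.
    exists b, dd; split => //; split => //.
    rewrite -(addrK dd b); apply: acB; [exact: hA| exact: hx| exact: htA].
  by move=> [b [dd [[hb hbA] hdd ->]]]; apply: acD; [exact: hA| exact: hbA| exact: htA].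
Qed.

End Step1.

End Main.

Theorem mainTheorem12 (R : realType) (K : fieldType) (abs : K -> R)
  (E : lmodType K) (nrm : E -> R) (A : set E) :
  nonarch_abs abs -> nontrivial_abs abs -> complete_abs abs ->
  nonarch_norm abs nrm ->
  local_compactoid abs nrm A ->
  banach_subset nrm (lspan A) ->
  exists (B D : set E),
    [/\ compactoid abs nrm B, linear_subspace D, finite_type abs nrm D &
        A = msum B D].
Proof.
move=> habs [x [hx0 hx1]] hcompK hnorm hlc hban.
have hxp' : 0 < abs x by rewrite lt_neqAle eq_sym hx0 (abs_ge0 habs).
have hxne : x != 0 by apply/eqP => h; move: hx0; rewrite h (abs0 habs) eqxx.
have [hlt|hgt] := ltrP (abs x) 1.
  exact: (final habs hnorm hcompK hxp' hlt hlc.1 hban hlc).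
have hgt' : 1 < abs x by rewrite lt_neqAle eq_sym hx1 hgt.
have hv0 : 0 < abs x^-1 by rewrite (absV habs) invr_gt0.
have hv1 : abs x^-1 < 1 by rewrite (absV habs) invf_lt1.
exact: (final habs hnorm hcompK hv0 hv1 hlc.1 hban hlc).
Qed.
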